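(* For $n\ge0$ let $Q_n=\{-1,0,+1\}^n$, so that $Q_0$ consists of the empty tuple $()$. On the graded vector space $\bigoplus_{n\ge1}K[Q_{n-1}]$ define, for $a\in Q_{p-1}$ and $b\in Q_{q-1}$ (and extended bilinearly), the following elements of $Q_{p+q-1}$, where $(a,\varepsilon,b)$ denotes concatenation: $$a\dashv b=(a,-1,b),\qquad a\perp b=(a,0,b),\qquad a\vdash b=(a,+1,b).$$ Then $\bigl(\bigoplus_{n\ge1}K[Q_{n-1}];\dashv,\vdash,\perp\bigr)$ is a cubical trialgebra. Moreover, it is the free cubical trialgebra on the one generator $()\in Q_0$: for any cubical trialgebra $A$ and any $a\in A$ there is a unique morphism of cubical trialgebras sending $()$ to $a$.
   Context: A cubical trialgebra is a $K$-vector space $A$ with three bilinear operations $\dashv,\vdash,\perp$ satisfying the nine relations $(x\circ_1y)\circ_2z=x\circ_1(y\circ_2z)$ for all $x,y,z\in A$ and all $\circ_1,\circ_2\in\{\dashv,\vdash,\perp\}$. Morphisms are linear maps preserving the three operations. *)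

(* Defs.v *)
From HB Require Import structures.
From mathcomp Require Import all_boot all_order all_algebra.
From mathcomp Require Import finmap.
From mathcomp.multinomials Require Import monalg.

Set Implicit Arguments.
Unset Strict Implicit.
Unset Printing Implicit Defensive.

Import GRing.Theory.
Local Open Scope ring_scope.

Inductive op3 := OpLeft | OpRight | OpPerp.

Definition bilinear_op (K : fieldType) (A : lmodType K) (m : A -> A -> A) :=
  (forall (c : K) x y z, m (c *: x + y) z = c *: m x z + m y z) /\
  (forall (c : K) x y z, m x (c *: y + z) = c *: m x y + m x z).

Definition cubical_trialgebra (K : fieldType) (A : lmodType K)
    (m : op3 -> A -> A -> A) : Prop :=
  (forall o, bilinear_op (m o)) /\
  (forall o1 o2 x y z, m o2 (m o1 x y) z = m o1 x (m o2 y z)).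

Definition trialg_morphism (K : fieldType) (A B : lmodType K)
    (mA : op3 -> A -> A -> A) (mB : op3 -> B -> B -> B) (f : A -> B) : Prop :=
  (forall (c : K) x y, f (c *: x + y) = c *: f x + f y) /\
  (forall o x y, f (mA o x y) = mB o (f x) (f y)).

Inductive trit := TMinus | TZero | TPlus.

Definition trit_to_nat (t : trit) : nat :=
  match t with TMinus => 0 | TZero => 1 | TPlus => 2 end.
Definition nat_to_trit (n : nat) : option trit :=
  match n with 0 => Some TMinus | 1 => Some TZero | 2 => Some TPlus | _ => None end.
Lemma trit_to_natK : pcancel trit_to_nat nat_to_trit.
Proof. by case. Qed.
HB.instance Definition _ := Countable.copy trit (pcan_type trit_to_natK).

(** Q_n is the set of sequences of trits of length n; the graded vector space
    (+)_{n>=1} K[Q_{n-1}] is the free K-vector space on all finite sequences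
    of trits, i.e. the monoid-algebra-as-module {malg K[seq trit]}. *)
Definition Qspace (K : fieldType) := {malg K[seq trit]}.

Definition sign_of (o : op3) : trit :=
  match o with OpLeft => TMinus | OpPerp => TZero | OpRight => TPlus end.

Definition Qop (K : fieldType) (o : op3) (x y : Qspace K) : Qspace K :=
  \sum_(u <- msupp x) \sum_(v <- msupp y)
     (x@_u * y@_v) *: << (u ++ sign_of o :: v) >>.

Definition Qunit (K : fieldType) : Qspace K := << [::] >>.

(* Main.v *)
Require Import Defs.
From HB Require Import structures.
From mathcomp Require Import all_boot all_order all_algebra.
From mathcomp Require Import finmap.
From mathcomp.multinomials Require Import monalg.

Set Implicit Arguments.
Unset Strict Implicit.
Unset Printing Implicit Defensive.
Import GRing.Theory.
Local Open Scope ring_scope.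


Section Aux.
Variable K : fieldType.
Local Notation Q := (Qspace K).

Definition islin (V : lmodType K) (F : Q -> V) :=
  forall (c : K) x y, F (c *: x + y) = c *: F x + F y.

Definition lin (V : lmodType K) (h : seq trit -> V) (x : Q) : V :=
  \sum_(u <- msupp x) x@_u *: h u.

Lemma linw (V : lmodType K) (h : seq trit -> V) (x : Q) (d : {fset seq trit}) :
  (msupp x `<=` d)%fset -> lin h x = \sum_(u <- d) x@_u *: h u.
Proof.
move=> sub; rewrite /lin; apply: big_fset_incl => // u _ /mcoeff_outdom ->.
by rewrite scale0r.
Qed.

Lemma lin_lin (V : lmodType K) (h : seq trit -> V) : islin (lin h).
Proof.
move=> c x y.
have s1 : (msupp x `<=` msupp x `|` msupp y)%fset by apply: fsubsetUl.
have s2 : (msupp y `<=` msupp x `|` msupp y)%fset by apply: fsubsetUr.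
have s3 : (msupp (c *: x + y) `<=` msupp x `|` msupp y)%fset.
  apply: fsubset_trans (msuppD_le _ _) _.
  by apply: fsetSU; apply: msuppZ_le.
rewrite (linw h s1) (linw h s2) (linw h s3) scaler_sumr -big_split /=.
apply: eq_bigr => u _; by rewrite mcoeffD mcoeffZ scalerDl scalerA.
Qed.

Lemma islin0 (V : lmodType K) (F : Q -> V) : islin F -> F 0 = 0.
Proof.
move=> HF; have := HF 1 0 0; rewrite !scale1r addr0.
move/(congr1 (fun z => z - F 0)). by rewrite /= addrK subrr.
Qed.

Lemma malgUZ (c : K) (k : seq trit) : << c *g k >> = c *: (<< k >> : Q).
Proof.
apply/malgP => k'; rewrite mcoeffZ !mcoeffU.
by case: (k == k'); rewrite ?mulr1 ?mulr0.
Qed.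

Lemma lin_decomp (V : lmodType K) (F : Q -> V) : islin F ->
  forall x, F x = lin (fun u => F << u >>) x.
Proof.
move=> HF x; rewrite {1}(monalgE x) /lin.
suff H : forall s : seq (seq trit),
  F (\sum_(k <- s) << x@_k *g k >>) = \sum_(k <- s) x@_k *: F << k >> by apply: H.
elim=> [|k s IH]; first by rewrite !big_nil islin0.
by rewrite !big_cons malgUZ HF IH.
Qed.

Lemma ext_eq (V : lmodType K) (F G : Q -> V) : islin F -> islin G ->
  (forall u, F << u >> = G << u >>) -> F =1 G.
Proof.
move=> HF HG E x; rewrite (lin_decomp HF) (lin_decomp HG) /lin.
by apply: eq_bigr => u _; rewrite E.
Qed.

Lemma islin_comp (V W : lmodType K) (F : V -> W) (G : Q -> V) :
  (forall (c : K) x y, F (c *: x + y) = c *: F x + F y) -> islin G ->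
  islin (fun x => F (G x)).
Proof. by move=> HF HG c x y; rewrite HG HF. Qed.

Lemma lin_U (V : lmodType K) (h : seq trit -> V) k : lin h << k >> = h k.
Proof.
rewrite /lin msuppU oner_eq0 big_seq_fset1 mcoeffUU scale1r //.
Qed.

Lemma QopE o (x y : Q) :
  Qop o x y = \sum_(u <- msupp x) x@_u *: lin (fun v => << u ++ sign_of o :: v >>) y.
Proof.
rewrite /Qop /lin; apply: eq_bigr => u _; rewrite scaler_sumr.
by apply: eq_bigr => v _; rewrite scalerA.
Qed.

Lemma Qop_l o y : islin (fun x => Qop o x y).
Proof.
move=> c x z.
have := lin_lin (fun u => lin (fun v => << u ++ sign_of o :: v >>) y) c x z.
by rewrite /= !QopE.
Qed.

Lemma Qop_r o x : islin (fun y => Qop o x y).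
Proof.
move=> c y z; rewrite !QopE scaler_sumr -big_split /=.
apply: eq_bigr => u _; rewrite lin_lin scalerDr !scalerA mulrC //.
Qed.

Lemma QopU o u v : Qop o (<< u >> : Q) << v >> = << u ++ sign_of o :: v >>.
Proof. by rewrite QopE msuppU oner_eq0 big_seq_fset1 mcoeffUU scale1r lin_U. Qed.

Lemma QopDl o c x y z : Qop o (c *: x + y) z = c *: Qop o x z + Qop o y z :> Q.
Proof. exact: (Qop_l o z c x y). Qed.
Lemma QopDr o c x y z : Qop o x (c *: y + z) = c *: Qop o x y + Qop o x z :> Q.
Proof. exact: (Qop_r o x c y z). Qed.

Definition op_of (t : trit) : op3 :=
  match t with TMinus => OpLeft | TZero => OpPerp | TPlus => OpRight end.

Lemma sign_op t : sign_of (op_of t) = t. Proof. by case: t. Qed.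
Lemma op_sign o : op_of (sign_of o) = o. Proof. by case: o. Qed.

End Aux.

Theorem proposition5p2 (K : fieldType) :
  cubical_trialgebra (@Qop K) /\
  (forall (A : lmodType K) (m : op3 -> A -> A -> A) (a : A),
     cubical_trialgebra m ->
     (exists f : Qspace K -> A,
        trialg_morphism (@Qop K) m f /\ f (Qunit K) = a) /\
     (forall f g : Qspace K -> A,
        trialg_morphism (@Qop K) m f -> f (Qunit K) = a ->
        trialg_morphism (@Qop K) m g -> g (Qunit K) = a ->
        f =1 g)).
Proof.
split.
  split; first by move=> o; split=> *; [apply: QopDl | apply: QopDr].
  move=> o1 o2 x y z; move: x; apply: ext_eq.
  - by move=> c x x'; rewrite !QopDl.
  - by move=> c x x'; rewrite !QopDl.
  move=> u; move: y; apply: ext_eq.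
  - by move=> c x x'; rewrite !QopDr !QopDl.
  - by move=> c x x'; rewrite !QopDl !QopDr.
  move=> v; move: z; apply: ext_eq.
  - by move=> c x x'; rewrite !QopDr.
  - by move=> c x x'; rewrite !QopDr.
  by move=> w; rewrite !QopU -catA.
move=> A m a [mlin massoc].
have mDl : forall o c x y z, m o (c *: x + y) z = c *: m o x z + m o y z.
  by move=> o; case: (mlin o).
have mDr : forall o c x y z, m o x (c *: y + z) = c *: m o x y + m o x z.
  by move=> o; case: (mlin o).
split.
  pose ev := fix ev (s : seq trit) : A :=
    if s is t :: s' then m (op_of t) a (ev s') else a.
  have evcat : forall o u v, ev (u ++ sign_of o :: v) = m o (ev u) (ev v).
    move=> o; elim=> [|t u IH] v /=; first by rewrite op_sign.
    by rewrite IH massoc.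
  exists (lin ev); split; last by rewrite /Qunit lin_U.
  split; first exact: lin_lin.
  move=> o x y; move: x; apply: ext_eq.
  - by move=> c x x'; rewrite ?QopDl ?QopDr !lin_lin ?mDl ?mDr.
  - by move=> c x x'; rewrite ?QopDl ?QopDr !lin_lin ?mDl ?mDr.
  move=> u; move: y; apply: ext_eq.
  - by move=> c x x'; rewrite ?QopDl ?QopDr !lin_lin ?mDl ?mDr.
  - by move=> c x x'; rewrite ?QopDl ?QopDr !lin_lin ?mDl ?mDr.
  by move=> v; rewrite QopU !lin_U evcat.
move=> f g [fl fm] fa [gl gm] ga; apply: ext_eq => // u.
elim: u => [|t u IH]; first by rewrite -[<< [::] >>]/(Qunit K) fa ga.
have -> : << t :: u >> = Qop (op_of t) << [::] >> << u >> :> Qspace K.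
  by rewrite QopU sign_op.
by rewrite fm gm IH -[<< [::] >>]/(Qunit K) fa ga.
Qed.
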